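(* Setting: $k$ tail observations $Z^{(1)},\dots,Z^{(k)}\in\mathbb R^p$ (optionally with proxy values $P^{(t)}\in\mathbb R^d$), $V=\{1,\dots,p\}$, true DAG $G^*$ with parent sets $\mathrm{pa}^*(j)$ and skeleton $E^*_{\mathrm{skel}}$, and a random candidate undirected edge set $\hat E_{\mathrm{skel}}$; asymptotics as $k,p\to\infty$ with $s_{\max}$ possibly growing. Let $c_3>0$ and, for each $j$, let $\mathcal A^{c_3}_j$ be the class of $A\subseteq V\setminus\{j\}$ with $|A|\le s_{\max}$ and $A\subseteq\mathrm{nb}(j;E)$ for some edge set $E\supseteq E^*_{\mathrm{skel}}$ with $|E|\le c_3ps_{\max}$. Let $\{R^\star_{j\mid A}(u)\}$ be deterministic population risks and $\hat R_{j\mid A}(u)=\mathrm{SAE}_j(A)/k$. Assume: (S) with probability tending to one, $E^*_{\mathrm{skel}}\subseteq\hat E_{\mathrm{skel}}$ and $|\hat E_{\mathrm{skel}}|\le c_3ps_{\max}$, and each true parent set has size at most $s_{\max}$; (C) $\eta_k:=\max_{j}\sup_{A\in\mathcal A_j^{c_3}}|\hat R_{j\mid A}(u)-R^\star_{j\mid A}(u)|=O_p\big(\sqrt{(s_{\max}+1)\log p/k}\big)$; (i) there is $\Delta_{\mathrm{miss}}>0$ with $R^\star_{j\mid A}(u)-R^\star_{j\mid\mathrm{pa}^*(j)}(u)\ge\Delta_{\mathrm{miss}}$ for all $j$ and all $A\in\mathcal A^{c_3}_j$ with $A\not\supseteq\mathrm{pa}^*(j)$; (ii) $R^\star_{j\mid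 A}(u)=R^\star_{j\mid\mathrm{pa}^*(j)}(u)$ for all $j$ and all $A\in\mathcal A^{c_3}_j$ with $A\supseteq\mathrm{pa}^*(j)$; (iii) there are constants $0<r_{\min}(u)\le r_{\max}(u)<\infty$ with $r_{\min}(u)\le R^\star_{j\mid A}(u)\le r_{\max}(u)$ for all $j$ and $A\in\mathcal A^{c_3}_j$; (iv) (equal-risk superset fit-gain control) with $\hat f_j(A)=\frac k2\log\hat R_{j\mid A}(u)$, $\max_j\sup\big(\hat f_j(A^* )-\hat f_j(A)\big)/|A\setminus A^*|=O_p(1)$, the supremum over pairs $A^*\subsetneq A$ in $\mathcal A^{c_3}_j$ with $R^\star_{j\mid A}(u)=R^\star_{j\mid A^*}(u)$; (v) $s_{\max}\sqrt{\log p/k}=o(1)$. Let $\hat G$ be any global minimizer of $\hat S(G)=\sum_{j=1}^p\mathrm{Score}(j,\mathrm{pa}_G(j))$ over DAGs $G$ on $V$ whose skeleton is contained in $\hat E_{\mathrm{skel}}$ and whose in-degrees are at most $s_{\max}$. Then $\mathbb P(\hat G=G^* )\to1$.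
   Context: Empirical score. For node $j$ and candidate parent set $A$, offsets are empirical $q$-quantiles ($q\in(0,1)$ fixed): $c_{\ell\to j}=\hat Q_q(\{Z^{(t)}_j-Z^{(t)}_\ell\}_{t=1}^k)$ for $\ell\in A$, $c_{r\to j}=\hat Q_q(\{Z^{(t)}_j-P^{(t)}_r\}_{t})$ for proxy components $r=1,\dots,d$ (omitted if no proxy), and $c_0=\hat Q_q(\{Z^{(t)}_j\}_t)$. The envelope fit is $\hat Z^{(t)}_j=\max\{c_0,\max_{\ell\in A}(Z^{(t)}_\ell+c_{\ell\to j}),\max_{r}(P^{(t)}_r+c_{r\to j})\}$ (a max over an empty set is $-\infty$), $\mathrm{SAE}_j(A)=\sum_{t=1}^k|Z^{(t)}_j-\hat Z^{(t)}_j|>0$, and $\mathrm{Score}(j,A)=\frac k2\log(\mathrm{SAE}_j(A)/k)+\frac12(\log k+2\gamma_{\mathrm{EBIC}}\log p)|A|$ with a fixed constant $\gamma_{\mathrm{EBIC}}\ge0$. $\mathrm{nb}(j;E)$ is the set of neighbours of $j$ in edge set $E$. *)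

(* Defs.v *)
From HB Require Import structures.
From mathcomp Require Import all_boot all_order all_algebra.
From mathcomp Require Import all_classical all_reals all_analysis.
Set Implicit Arguments. Unset Strict Implicit. Unset Printing Implicit Defensive.
Import Order.TTheory GRing.Theory Num.Theory.
Import numFieldNormedType.Exports.

Local Open Scope ring_scope.

Section Score.
Variable R : realType.

(* Empirical q-quantile (inverse empirical CDF, lower convention):
   the ceil(q k)-th order statistic, i.e. the smallest sample value y with
   #{t | x_t <= y} >= q k. *)
Definition emp_quantile (q : R) (k : nat) (x : 'I_k -> R) : R :=
  let s := sort <=%R [seq x t | t <- enum 'I_k] in
  nth 0 s (find (fun i : nat => q * k%:R <= i.+1%:R) (iota 0 k)).

(* Observations Z t l (t : sample index, l : coordinate), proxies Px t r
   (d = 0 encodes "no proxy"). *)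
Definition SAE (q : R) (k p d : nat) (Z : 'I_k -> 'I_p -> R)
    (Px : 'I_k -> 'I_d -> R) (j : 'I_p) (A : {set 'I_p}) : R :=
  let c0 := emp_quantile q (fun t => Z t j) in
  let cl := fun l => emp_quantile q (fun t => Z t j - Z t l) in
  let cr := fun r => emp_quantile q (fun t => Z t j - Px t r) in
  \sum_(t < k) `| Z t j - Num.max (\big[Num.max/c0]_(l in A) (Z t l + cl l))
                                  (\big[Num.max/c0]_(r < d) (Px t r + cr r)) |.

Definition Rhat (q : R) (k p d : nat) (Z : 'I_k -> 'I_p -> R)
    (Px : 'I_k -> 'I_d -> R) (j : 'I_p) (A : {set 'I_p}) : R :=
  SAE q Z Px j A / k%:R.

Definition fhat (q : R) (k p d : nat) (Z : 'I_k -> 'I_p -> R)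
    (Px : 'I_k -> 'I_d -> R) (j : 'I_p) (A : {set 'I_p}) : R :=
  k%:R / 2 * ln (Rhat q Z Px j A).

Definition Score (q gamma : R) (k p d : nat) (Z : 'I_k -> 'I_p -> R)
    (Px : 'I_k -> 'I_d -> R) (j : 'I_p) (A : {set 'I_p}) : R :=
  k%:R / 2 * ln (SAE q Z Px j A / k%:R)
  + 2^-1 * (ln k%:R + 2 * gamma * ln p%:R) * #|A|%:R.

End Score.

Section Graphs.
Variable p : nat.

Definition parent_rel (pa : {ffun 'I_p -> {set 'I_p}}) : rel 'I_p :=
  fun i j => i \in pa j.

(* acyclic: no directed cycle (an edge i -> j followed by a directed path back
   from j to i); self-loops are excluded since connect is reflexive. *)
Definition is_dag (pa : {ffun 'I_p -> {set 'I_p}}) : Prop :=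
  forall i j : 'I_p, i \in pa j -> ~~ connect (parent_rel pa) j i.

Definition is_edgeset (E : {set {set 'I_p}}) : Prop :=
  forall e, e \in E -> #|e| = 2.

Definition skel (pa : {ffun 'I_p -> {set 'I_p}}) : {set {set 'I_p}} :=
  [set [set i; j] | j : 'I_p, i : 'I_p in pa j].

Definition nb (j : 'I_p) (E : {set {set 'I_p}}) : {set 'I_p} :=
  [set i | [set i; j] \in E].

End Graphs.

Definition cand_class (R : realType) (c3 : R) (p s : nat)
    (Gstar : {ffun 'I_p -> {set 'I_p}}) (j : 'I_p) (A : {set 'I_p}) : Prop :=
  j \notin A /\ (#|A| <= s)%N /\
  exists E : {set {set 'I_p}}, is_edgeset E /\ skel Gstar \subset E /\
     (#|E|%:R <= c3 * p%:R * s%:R) /\ A \subset nb j E.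

Definition feasible (p s : nat) (Ehat : {set {set 'I_p}})
    (G : {ffun 'I_p -> {set 'I_p}}) : Prop :=
  is_dag G /\ skel G \subset Ehat /\ forall j, (#|G j| <= s)%N.

Definition Shat (R : realType) (q gamma : R) (k p d : nat) (Z : 'I_k -> 'I_p -> R)
    (Px : 'I_k -> 'I_d -> R) (G : {ffun 'I_p -> {set 'I_p}}) : R :=
  \sum_(j < p) Score q gamma Z Px j (G j).

(* "with probability tending to one" (inner-probability convention): there are
   measurable events B n contained in E n with P(B n) -> 1. *)
Definition wptt1 (R : realType) (d : measure_display) (T : measurableType d)
    (P : probability T R) (E : nat -> set T) : Prop :=
  exists B : nat -> set T, (forall n, measurable (B n)) /\
    (forall n, (B n `<=` E n)%classic) /\
    ((fun n => fine (P (B n))) @ \oo --> (1 : R))%classic.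

(* X_n = O_p(r_n) formulated through the event family E M n = {"X_n <= M r_n"}:
   for every eps > 0 there are M, N with P(E M n) >= 1 - eps for n >= N
   (inner-probability convention). *)
Definition Op_events (R : realType) (d : measure_display) (T : measurableType d)
    (P : probability T R) (E : R -> nat -> set T) : Prop :=
  forall eps : R, 0 < eps -> exists M : R, exists N : nat, forall n, (N <= n)%N ->
    exists B : set T, measurable B /\ (B `<=` E M n)%classic /\ 1 - eps <= fine (P B).

(* Main.v *)
Require Import Defs.
From HB Require Import structures.
From mathcomp Require Import all_boot all_order all_algebra.
From mathcomp Require Import all_classical all_reals all_analysis.
From mathcomp Require Import ring lra.
Import Order.TTheory GRing.Theory Num.Theory.
Import numFieldNormedType.Exports.
Local Open Scope ring_scope.


Lemma lin1 (R : realType) (a b c x e : R) :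
  1 - e/2 <= a -> a <= b -> b - c < x -> c < e/2 -> 1 - x < e.
Proof. move=> *; lra. Qed.

Section Prob.
Variables (R : realType) (dT : measure_display) (T : measurableType dT)
  (P : probability T R).

Lemma Pfin (A : set T) : measurable A -> (fine (P A))%:E = P A.
Proof. by move=> mA; rewrite fineK // fin_num_measure. Qed.

Lemma P01 (A : set T) : measurable A -> 0 <= fine (P A) <= 1.
Proof.
move=> mA; have h1 := probability_le1 P mA.
have h0 : (0 <= P A)%E by [].
by rewrite -!lee_fin Pfin // h0 h1.
Qed.

Lemma PI_ge (A B : set T) : measurable A -> measurable B ->
  fine (P A) + fine (P B) - 1 <= fine (P (A `&` B)%classic).
Proof.
move=> mA mB.
have mI : measurable (A `&` B)%classic by exact: measurableI.
have h : (P (~` A `|` ~` B)%classic <= P (~` A)%classic + P (~` B)%classic)%E.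
  by apply: measureU2; exact: measurableC.
rewrite -setCI !probability_setC // in h.
move: h; rewrite -(Pfin A mA) -(Pfin B mB) -(Pfin _ mI) -!EFinB -EFinD lee_fin.
move=> h; lra.
Qed.

Lemma wptt1_of (E : nat -> set T) :
  (forall eps : R, 0 < eps -> exists N : nat, forall n, (N <= n)%N ->
     exists B, measurable B /\ (B `<=` E n)%classic /\ 1 - eps <= fine (P B)) ->
  wptt1 P E.
Proof.
move=> H.
pose S n := [set x : R | exists B, measurable B /\ (B `<=` E n)%classic /\ x = fine (P B)]%classic.
have hS : forall n, has_sup (S n).
  move=> n; split.
    exists 0; exists set0; split => //; split => //.
    by rewrite measure0.
  exists 1 => x [B [mB [_ ->]]]; by case/andP: (P01 _ mB).
have : forall n, exists B, measurable B /\ (B `<=` E n)%classic /\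
   sup (S n) - (n.+1%:R)^-1 < fine (P B).
  move=> n; have e0 : 0 < (n.+1%:R : R)^-1 by rewrite invr_gt0 ltr0Sn.
  have [x [B [mB [BE ->]]] hx] := sup_adherent e0 (hS n).
  by exists B.
move=> /choice [Bf HB]; exists Bf; split; first by move=> n; case: (HB n).
split; first by move=> n; case: (HB n) => _ [].
apply/cvgrPdist_lt => e e0.
have e20 : 0 < e / 2 by rewrite divr_gt0.
have [N HN] := H _ e20.
have := nbhs_infty_gtr (2 / e); case=> M _ HM.
exists (maxn N M) => // n /= ; rewrite geq_max => /andP [Nn Mn].
have [B [mB [BE hB]]] := HN n Nn.
have supB : fine (P B) <= sup (S n).
  apply: sup_upper_bound => //; exists B; split => //.
case: (HB n) => mBn [_ hBn].
have hMn : 2 / e < n%:R by exact: HM.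
have hinv : (n.+1%:R)^-1 < e / 2.
  have : (n.+1%:R)^-1 < (2 / e)^-1.
    rewrite ltf_pV2 ?posrE ?ltr0Sn ?divr_gt0 //.
    by apply: lt_trans hMn _; rewrite ltr_nat.
  by rewrite invf_div.
have := P01 _ mBn; case/andP => _ h1.
rewrite ger0_norm ?subr_ge0 //.
exact: (@lin1 _ _ _ _ _ _ hB supB hBn hinv).
Qed.

End Prob.

Set Implicit Arguments. Unset Strict Implicit.


Section G.
Variable p : nat.
Implicit Types pa : {ffun 'I_p -> {set 'I_p}}.

Lemma dag_irr pa i j : is_dag pa -> i \in pa j -> i != j.
Proof.
move=> hd hij; apply/eqP => eij; move: (hd _ _ hij); rewrite eij connect0.
by [].
Qed.

Lemma in_skel pa i j : i \in pa j -> [set i; j] \in skel pa.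
Proof. by move=> h; apply: (@imset2_f _ _ _ (fun j i => [set i; j])). Qed.

Lemma skel_edge pa : is_dag pa -> is_edgeset (skel pa).
Proof.
move=> hd e /imset2P [j i _ hij ->]; rewrite cards2.
by rewrite (dag_irr hd hij).
Qed.
End G.



Definition penal (R : realType) (gamma : R) (k p : nat) :=
  2^-1 * (ln k%:R + 2 * gamma * ln p%:R).

Lemma ScoreE (R : realType) (q gamma : R) (k p d : nat)
  (Z : 'I_k -> 'I_p -> R) (Px : 'I_k -> 'I_d -> R) j A :
  Score q gamma Z Px j A = fhat q Z Px j A + penal gamma k p * #|A|%:R.
Proof. by []. Qed.

Lemma pen_ge0 (R : realType) (gamma : R) k p : 0 <= gamma -> 0 <= penal gamma k p.
Proof.
move=> hg.
have lnn (m : nat) : 0 <= ln m%:R :> R.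
  case: m => [|m]; first by rewrite ln0.
  by apply: ln_ge0; rewrite ler1n.
rewrite /penal mulr_ge0 ?invr_ge0 ?ler0n // addr_ge0 ?lnn //.
by rewrite mulr_ge0 ?lnn // mulr_ge0.
Qed.

Lemma score_cmp (R : realType) (q gamma c3 : R) (k p d s : nat)
  (Z : 'I_k -> 'I_p -> R) (Px : 'I_k -> 'I_d -> R)
  (Gstar : {ffun 'I_p -> {set 'I_p}}) (Rstar : 'I_p -> {set 'I_p} -> R)
  (Delta rmin rmax eta Miv : R)
  (hgamma : 0 <= gamma) (hDelta : 0 < Delta) (hrmin : 0 < rmin)
  (hrr : rmin <= rmax)
  (hGs : forall j, (#|Gstar j| <= s)%N)
  (hC : forall j A, cand_class c3 s Gstar j A -> `| Rhat q Z Px j A - Rstar j A | <= eta)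
  (hi : forall j A, cand_class c3 s Gstar j A -> ~~ (Gstar j \subset A) ->
          Rstar j A - Rstar j (Gstar j) >= Delta)
  (hii : forall j A, cand_class c3 s Gstar j A -> Gstar j \subset A -> Rstar j A = Rstar j (Gstar j))
  (hiii : forall j A, cand_class c3 s Gstar j A -> rmin <= Rstar j A <= rmax)
  (hiv : forall j As A, cand_class c3 s Gstar j As -> cand_class c3 s Gstar j A ->
        As \proper A -> Rstar j A = Rstar j As ->
        (fhat q Z Px j As - fhat q Z Px j A) / #|A :\: As|%:R <= Miv)
  (hk0 : 0 < k%:R :> R)
  (heta : (0 < s)%N -> eta <= rmin / 2 /\ eta <= Delta / 4)
  (hgap : penal gamma k p * s%:R < k%:R / 2 * ln (1 + Delta / (2 * (rmax + Delta))))
  (hpen : Miv < penal gamma k p)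
  j A : cand_class c3 s Gstar j A -> cand_class c3 s Gstar j (Gstar j) ->
  Score q gamma Z Px j (Gstar j) <= Score q gamma Z Px j A /\
  (A != Gstar j -> Score q gamma Z Px j (Gstar j) < Score q gamma Z Px j A).
Proof.
set pen := penal gamma k p in hgap hpen *.
set cc := Delta / (2 * (rmax + Delta)).
move=> cA cS.
suff H : A != Gstar j -> Score q gamma Z Px j (Gstar j) < Score q gamma Z Px j A.
  split => //; have [->|ne] := eqVneq A (Gstar j); first by [].
  exact: ltW (H ne).
move=> neA; rewrite !ScoreE -/pen.
have hpen0 : 0 <= pen by exact: pen_ge0.
have [sub|nsub] := boolP (Gstar j \subset A).
-
  have prop : Gstar j \proper A by rewrite finset.properEneq eq_sym neA sub.
  have eqR := hii _ _ cA sub.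
  have := hiv _ _ _ cS cA prop eqR.
  have m1 : (0 < #|A :\: Gstar j|)%N.
    case/properP: prop => _ [x xA xS]; apply/card_gt0P; exists x.
    by rewrite inE xA xS.
  have cardA : #|A|%:R = #|Gstar j|%:R + #|A :\: Gstar j|%:R :> R.
    by rewrite cardsDS // -natrD subnKC // subset_leq_card.
  set m := #|A :\: Gstar j|%:R : R.
  have m0 : 0 < m by rewrite ltr0n.
  rewrite ler_pdivrMr // cardA => hm.
  have : Miv * m < pen * m by rewrite ltr_pM2r.
  lra.
-
  have sgt0 : (0 < s)%N.
    case: (posnP s) => // s0; exfalso; move: nsub.
    have := hGs j; rewrite s0 leqn0 cards_eq0 => /eqP ->.
    by rewrite finset.sub0set.
  have [he1 he2] := heta sgt0.
  have dA := hi _ _ cA nsub.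
  have [r1 r2] := andP (hiii _ _ cS).
  have [a1 a2] := andP (hiii _ _ cA).
  have cA' := hC _ _ cA; have cS' := hC _ _ cS.
  move: cA' cS'; rewrite !ler_norml => /andP [ca1 ca2] /andP [cs1 cs2].
  set r := Rstar j (Gstar j) in dA r1 r2 cs1 cs2.
  set hA := Rhat q Z Px j A in ca1 ca2 *; set hS := Rhat q Z Px j (Gstar j) in cs1 cs2 *.
  have hS0 : 0 < hS by lra.
  have cc0 : 0 < cc by rewrite /cc divr_gt0 // mulr_gt0 //; lra.
  have ccm : cc * (rmax + Delta) = Delta / 2.
    rewrite /cc; field; lra.
  have hAS : (1 + cc) * hS <= hA.
    have : cc * hS <= cc * (rmax + Delta) by rewrite ler_pM2l //; lra.
    rewrite ccm; nra.
  have lnA : ln (1 + cc) + ln hS <= ln hA.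
    rewrite -lnM ?posrE //; last by lra.
    by rewrite ler_ln ?posrE //; nra.
  have fA : fhat q Z Px j A - fhat q Z Px j (Gstar j) >= k%:R / 2 * ln (1 + cc).
    rewrite /fhat -/hA -/hS -mulrBr.
    by rewrite ler_pM2l ?divr_gt0 //; lra.
  have cS1 : #|Gstar j|%:R <= s%:R :> R by rewrite ler_nat.
  have : pen * #|Gstar j|%:R <= pen * s%:R by rewrite ler_wpM2l.
  have : 0 <= pen * #|A|%:R by rewrite mulr_ge0.
  lra.
Qed.


Lemma cand_of (R : realType) (c3 : R) (p s : nat) (Ehat : {set {set 'I_p}})
  (Gstar G : {ffun 'I_p -> {set 'I_p}}) j :
  is_dag Gstar -> skel Gstar \subset Ehat -> #|Ehat|%:R <= c3 * p%:R * s%:R ->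
  feasible s Ehat G -> cand_class c3 s Gstar j (G j).
Proof.
move=> dS sS cE [dG [sG degG]]; split.
  by apply/negP => jj; move: (dag_irr dG jj); rewrite eqxx.
split; first exact: degG.
exists (skel Gstar :|: skel G); split.
  move=> e; rewrite inE => /orP [] he; [exact: (skel_edge dS) | exact: (skel_edge dG)].
split; first exact: finset.subsetUl.
split.
  apply: le_trans cE; rewrite ler_nat; apply: subset_leq_card.
  by rewrite finset.subUset sS sG.
apply/fintype.subsetP => i iG; rewrite inE; apply/finset.setUP; right; exact: in_skel.
Qed.

Lemma global_min (R : realType) (q gamma c3 : R) (k p d s : nat)
  (Z : 'I_k -> 'I_p -> R) (Px : 'I_k -> 'I_d -> R) (Ehat : {set {set 'I_p}})
  (Gstar : {ffun 'I_p -> {set 'I_p}}) (Rstar : 'I_p -> {set 'I_p} -> R)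
  (Delta rmin rmax eta Miv : R)
  (hgamma : 0 <= gamma) (hDelta : 0 < Delta) (hrmin : 0 < rmin)
  (hrr : rmin <= rmax)
  (hdag : is_dag Gstar) (hsk : skel Gstar \subset Ehat)
  (hE : #|Ehat|%:R <= c3 * p%:R * s%:R)
  (hGs : forall j, (#|Gstar j| <= s)%N)
  (hC : forall j A, cand_class c3 s Gstar j A -> `| Rhat q Z Px j A - Rstar j A | <= eta)
  (hi : forall j A, cand_class c3 s Gstar j A -> ~~ (Gstar j \subset A) ->
          Rstar j A - Rstar j (Gstar j) >= Delta)
  (hii : forall j A, cand_class c3 s Gstar j A -> Gstar j \subset A -> Rstar j A = Rstar j (Gstar j))
  (hiii : forall j A, cand_class c3 s Gstar j A -> rmin <= Rstar j A <= rmax)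
  (hiv : forall j As A, cand_class c3 s Gstar j As -> cand_class c3 s Gstar j A ->
        As \proper A -> Rstar j A = Rstar j As ->
        (fhat q Z Px j As - fhat q Z Px j A) / #|A :\: As|%:R <= Miv)
  (hk0 : 0 < k%:R :> R)
  (heta : (0 < s)%N -> eta <= rmin / 2 /\ eta <= Delta / 4)
  (hgap : penal gamma k p * s%:R < k%:R / 2 * ln (1 + Delta / (2 * (rmax + Delta))))
  (hpen : Miv < penal gamma k p)
  (G : {ffun 'I_p -> {set 'I_p}}) :
  feasible s Ehat G ->
  (forall G', feasible s Ehat G' -> Shat q gamma Z Px G <= Shat q gamma Z Px G') ->
  G = Gstar.
Proof.
move=> fG minG.
have fS : feasible s Ehat Gstar by split => //; split.
have cls X j : feasible s Ehat X -> cand_class c3 s Gstar j (X j).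
  by move=> fX; exact: (@cand_of R c3 p s Ehat Gstar X j hdag hsk hE fX).
have cmp j := score_cmp hgamma hDelta hrmin hrr hGs hC hi hii hiii hiv hk0 heta hgap hpen
   (cls G j fG) (cls Gstar j fS).
apply/ffunP => j0; case: (eqVneq (G j0) (Gstar j0)) => // ne; exfalso.
have := minG _ fS; rewrite /Shat (bigD1 j0) //= [X in _ <= X](bigD1 j0) //=.
have h1 := (cmp j0).2 ne.
have h2 : \sum_(i < p | i != j0) Score q gamma Z Px i (Gstar i) <=
          \sum_(i < p | i != j0) Score q gamma Z Px i (G i).
  by apply: ler_sum => i _; exact: (cmp i).1.
lra.
Qed.


Lemma arith_eta (R : realType) (s : nat) (L K MC a dl : R) :
  0 <= L -> 0 < K -> MC <= a -> 0 <= a -> 0 <= dl -> (0 < s)%N ->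
  s%:R ^+ 2 * (L / K) <= dl ^+ 2 ->
  MC * Num.sqrt (s.+1%:R * L / K) <= a * (2 * dl).
Proof.
move=> L0 K0 Ma a0 d0 s0 hx.
have S1 : 1 <= s%:R :> R by rewrite ler1n.
have LK0 : 0 <= L / K by rewrite divr_ge0 // ltW.
have hu : s.+1%:R * L / K <= (2 * dl) ^+ 2.
  rewrite -mulrA -natr1.
  have : (s%:R + 1) * (L / K) <= 2 * (s%:R ^+ 2 * (L / K)).
    rewrite [X in _ <= X]mulrA ler_wpM2r //; nra.
  nra.
have u0 : 0 <= s.+1%:R * L / K by rewrite -mulrA mulr_ge0.
have hs : Num.sqrt (s.+1%:R * L / K) <= 2 * dl.
  rewrite -(@ger0_norm _ (2 * dl)) ?mulr_ge0 // -sqrtr_sqr ler_sqrt //.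
  exact: sqr_ge0.
have sq0 : 0 <= Num.sqrt (s.+1%:R * L / K) by exact: sqrtr_ge0.
have : MC * Num.sqrt (s.+1%:R * L / K) <= a * Num.sqrt (s.+1%:R * L / K).
  by rewrite ler_wpM2r.
have : a * Num.sqrt (s.+1%:R * L / K) <= a * (2 * dl) by rewrite ler_wpM2l.
lra.
Qed.

Lemma arith_gap (R : realType) (s : nat) (L K g dl c0 : R) :
  1 <= L -> 0 < K -> 0 <= g -> 0 <= dl <= 1 ->
  s%:R ^+ 2 * (L / K) <= dl ^+ 2 -> dl * (2 + 2 * g) < c0 ->
  2^-1 * (ln K + 2 * g * L) * s%:R < K / 2 * c0.
Proof.
move=> L1 K0 g0 /andP [d0 d1] hx hc.
have S0 : 0 <= s%:R :> R by [].
have SS : s%:R <= s%:R ^+ 2 :> R.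
  rewrite -natrX ler_nat; case: (s) => // m.
  by rewrite expnS leq_pmulr // expn_gt0.
set S := s%:R in S0 SS hx *.
set y := Num.sqrt K.
have y0 : 0 < y by rewrite sqrtr_gt0.
have Ky : K = y * y by rewrite /y -expr2 sqr_sqrtr // ltW.
have lnK : ln K <= 2 * y.
  rewrite Ky lnM ?posrE //; have := ln_sublinear y0; lra.
have hX : S ^+ 2 * L <= dl ^+ 2 * K.
  have : S ^+ 2 * L = S ^+ 2 * (L / K) * K by field; lra.
  move=> ->; rewrite ler_wpM2r //; lra.
have Sy : S <= dl * y.
  have : S ^+ 2 <= (dl * y) ^+ 2.
    have Ky2 : y ^+ 2 = K by rewrite /y sqr_sqrtr // ltW.
    rewrite exprMn Ky2; apply: le_trans hX; rewrite ler_peMr //.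
    exact: sqr_ge0.
  have dy0 : 0 <= dl * y by rewrite mulr_ge0 // ltW.
  move=> hsq; nra.
have h1 : ln K * S <= 2 * dl * K.
  have : ln K * S <= 2 * y * S by rewrite ler_wpM2r.
  have : 2 * y * S <= 2 * y * (dl * y) by rewrite ler_wpM2l // mulr_ge0 // ltW.
  rewrite Ky; lra.
have h2 : L * S <= dl * K.
  have : L * S <= L * S ^+ 2 by rewrite ler_wpM2l //; lra.
  have : dl ^+ 2 * K <= dl * K.
    have e : dl ^+ 2 <= dl by rewrite expr2; have := ler_wpM2l d0 d1; rewrite mulr1.
    by rewrite ler_wpM2r // ltW.
  lra.
have h3 : g * (L * S) <= g * (dl * K) by rewrite ler_wpM2l.
have h4 : dl * (2 + 2 * g) * K < c0 * K by rewrite ltr_pM2r.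
lra.
Qed.

Theorem theorem4
  (R : realType) (dT : measure_display) (T : measurableType dT)
  (Prob : probability T R)
  (q gamma c3 : R) (hq : 0 < q < 1) (hgamma : 0 <= gamma) (hc3 : 0 < c3)
  (k p d s : nat -> nat)
  (Z : forall n, T -> 'I_(k n) -> 'I_(p n) -> R)
  (Px : forall n, T -> 'I_(k n) -> 'I_(d n) -> R)
  (Ehat : forall n, T -> {set {set 'I_(p n)}})
  (Gstar : forall n, {ffun 'I_(p n) -> {set 'I_(p n)}})
  (Rstar : forall n, 'I_(p n) -> {set 'I_(p n)} -> R)
  (* k, p -> oo *)
  (hk : forall M : nat, exists N : nat, forall n, (N <= n)%N -> (M <= k n)%N)
  (hp : forall M : nat, exists N : nat, forall n, (N <= n)%N -> (M <= p n)%N)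
  (* G* is a DAG *)
  (hdag : forall n, is_dag (Gstar n))
  (* (S) *)
  (hS : wptt1 Prob (fun n => [set w | skel (Gstar n) \subset Ehat n w
          /\ #|Ehat n w|%:R <= c3 * (p n)%:R * (s n)%:R
          /\ forall j, (#|Gstar n j| <= s n)%N]%classic))
  (* (C) *)
  (hC : Op_events Prob (fun M n => [set w | forall j A,
          cand_class c3 (s n) (Gstar n) j A ->
          `| Rhat q (Z n w) (Px n w) j A - Rstar n j A |
            <= M * Num.sqrt ((s n).+1%:R * ln (p n)%:R / (k n)%:R)]%classic))
  (* (i) *)
  (Delta_miss : R) (hDelta : 0 < Delta_miss)
  (hi : forall n j A, cand_class c3 (s n) (Gstar n) j A ->
          ~~ (Gstar n j \subset A) ->
          Rstar n j A - Rstar n j (Gstar n j) >= Delta_miss)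
  (* (ii) *)
  (hii : forall n j A, cand_class c3 (s n) (Gstar n) j A ->
          Gstar n j \subset A -> Rstar n j A = Rstar n j (Gstar n j))
  (* (iii) *)
  (rmin rmax : R) (hrmin : 0 < rmin) (hrminmax : rmin <= rmax)
  (hiii : forall n j A, cand_class c3 (s n) (Gstar n) j A ->
          rmin <= Rstar n j A <= rmax)
  (* (iv): | max_j sup (fhat(Astar) - fhat(A)) / card(A minus Astar) | = O_p(1),
     with the convention sup over an empty family = 0 *)
  (hiv : Op_events Prob (fun M n => [set w |
          (forall j Astar A,
             cand_class c3 (s n) (Gstar n) j Astar ->
             cand_class c3 (s n) (Gstar n) j A ->
             Astar \proper A -> Rstar n j A = Rstar n j Astar ->
             (fhat q (Z n w) (Px n w) j Astar - fhat q (Z n w) (Px n w) j A)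
               / #|A :\: Astar|%:R <= M)
          /\
          ((exists j Astar A,
             [/\ cand_class c3 (s n) (Gstar n) j Astar,
                 cand_class c3 (s n) (Gstar n) j A,
                 Astar \proper A & Rstar n j A = Rstar n j Astar]) ->
           exists j Astar A,
             [/\ cand_class c3 (s n) (Gstar n) j Astar,
                 cand_class c3 (s n) (Gstar n) j A,
                 Astar \proper A, Rstar n j A = Rstar n j Astar &
                 - M <= (fhat q (Z n w) (Px n w) j Astar
                          - fhat q (Z n w) (Px n w) j A) / #|A :\: Astar|%:R])
          ]%classic))
  (* (v) *)
  (hv : ((fun n => (s n)%:R * Num.sqrt (ln (p n)%:R / (k n)%:R))
          @ \oo --> (0 : R))%classic) :
  wptt1 Prob (fun n => [set w | forall G : {ffun 'I_(p n) -> {set 'I_(p n)}},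
      feasible (s n) (Ehat n w) G ->
      (forall G', feasible (s n) (Ehat n w) G' ->
         Shat q gamma (Z n w) (Px n w) G <= Shat q gamma (Z n w) (Px n w) G') ->
      G = Gstar n]%classic).
Proof.
apply: wptt1_of => eps eps0.
have e3 : 0 < eps / 3 by rewrite divr_gt0.
case: hS => BS [mBS [BSsub cvS]].
have [MC [NC HC]] := hC _ e3.
have [MV [NV HV]] := hiv _ e3.
have := (cvgrPdist_lt _ _).1 cvS _ e3; case=> N1 _ HN1.
set cc := Delta_miss / (2 * (rmax + Delta_miss)).
have cc0 : 0 < cc by rewrite divr_gt0 // mulr_gt0 //; lra.
set c0 := ln (1 + cc).
have c00 : 0 < c0 by apply: ln_gt0; lra.
set a := Num.max MC 0.
have a0 : 0 <= a by rewrite le_max lexx orbT.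
have Ma : MC <= a by rewrite le_max lexx.
set m := Num.min rmin Delta_miss.
have m0 : 0 < m by rewrite lt_min hrmin hDelta.
have mr : m <= rmin by rewrite ge_min lexx.
have mD : m <= Delta_miss by rewrite ge_min lexx orbT.
set d1 := c0 / (4 * (1 + gamma)).
set d2 := m / (8 * (a + 1)).
have d10 : 0 < d1 by rewrite divr_gt0 // mulr_gt0 //; lra.
have d20 : 0 < d2 by rewrite divr_gt0 // mulr_gt0 //; lra.
set dl := Num.min 1 (Num.min d1 d2).
have dl0 : 0 < dl by rewrite !lt_min ltr01 d10 d20.
have dl1 : dl <= 1 by rewrite ge_min lexx.
have dld1 : dl <= d1 by rewrite !ge_min lexx orbT.
have dld2 : dl <= d2 by rewrite !ge_min lexx !orbT.
have hdc : dl * (2 + 2 * gamma) < c0.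
  have : dl * (4 * (1 + gamma)) <= c0.
    by rewrite -ler_pdivlMr // mulr_gt0 //; lra.
  have : 0 < dl * (2 + 2 * gamma) by rewrite mulr_gt0 //; lra.
  nra.
have hda : a * (2 * dl) <= m / 4.
  have : dl * (8 * (a + 1)) <= m.
    by rewrite -ler_pdivlMr // mulr_gt0 //; lra.
  nra.
have := (cvgrPdist_lt _ _).1 hv _ dl0; case=> N2 _ HN2.
have [N3 HN3] := hk (maxn 1 (Num.Def.archi_bound (expR (2 * MV)))).
have [N4 HN4] := hp (Num.Def.archi_bound (expR (1 : R))).
exists (maxn (maxn (maxn N1 NC) (maxn NV N2)) (maxn N3 N4)) => n.
rewrite !geq_max => /andP [/andP [/andP [n1 nC] /andP [nV n2]] /andP [n3 n4]].
have [BC [mBC [BCsub PBC]]] := HC n nC.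
have [BV [mBV [BVsub PBV]]] := HV n nV.
exists ((BS n `&` BC) `&` BV)%classic.
have mI1 : measurable (BS n `&` BC)%classic by exact: measurableI.
split; first exact: measurableI.
split; last first.
  have hS1 := HN1 n n1; rewrite /= ltr_norml in hS1.
  case/andP: hS1 => _ hS1.
  have := @PI_ge _ _ _ Prob _ _ (mBS n) mBC.
  have := @PI_ge _ _ _ Prob _ _ mI1 mBV.
  lra.
move=> w [[wS wC] wV] G fG minG.
have [skS [cardE degS]] := BSsub n w wS.
have hC' := BCsub w wC.
have [hiv' _] := BVsub w wV.
have k1 : (1 <= k n)%N by have := HN3 n n3; rewrite geq_max => /andP [].
have kb : (Num.Def.archi_bound (expR (2 * MV)) <= k n)%N.
  by have := HN3 n n3; rewrite geq_max => /andP [].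
have hk0 : 0 < (k n)%:R :> R by rewrite ltr0n.
have kexp : expR (2 * MV) < (k n)%:R.
  apply: lt_le_trans (archi_boundP (ltW (expR_gt0 _))) _.
  by rewrite ler_nat.
have pexp : expR 1 < (p n)%:R :> R.
  apply: lt_le_trans (archi_boundP (ltW (expR_gt0 _))) _.
  by rewrite ler_nat; exact: HN4.
have p0 : 0 < (p n)%:R :> R by apply: lt_trans pexp; exact: expR_gt0.
have lnp : 1 < ln (p n)%:R :> R.
  have : ln (expR 1) < ln (p n)%:R :> R by rewrite ltr_ln ?posrE ?expR_gt0.
  by rewrite expRK; apply.
have lnk : 2 * MV < ln (k n)%:R :> R.
  have : ln (expR (2 * MV)) < ln (k n)%:R :> R by rewrite ltr_ln ?posrE ?expR_gt0.
  by rewrite expRK; apply.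
have LK0 : 0 <= ln (p n)%:R / (k n)%:R :> R by rewrite divr_ge0 //; lra.
have hx : (s n)%:R ^+ 2 * (ln (p n)%:R / (k n)%:R) <= dl ^+ 2.
  have := HN2 n n2; rewrite /= sub0r normrN ger0_norm; last first.
    by rewrite mulr_ge0 // sqrtr_ge0.
  move=> hlt.
  have x0 : 0 <= (s n)%:R * Num.sqrt (ln (p n)%:R / (k n)%:R) :> R by rewrite mulr_ge0 // sqrtr_ge0.
  have : ((s n)%:R * Num.sqrt (ln (p n)%:R / (k n)%:R)) ^+ 2 <= dl ^+ 2.
    rewrite -subr_ge0 subr_sqr mulr_ge0 //; lra.
  by rewrite exprMn sqr_sqrtr.
apply: (@global_min R q gamma c3 (k n) (p n) (d n) (s n) (Z n w) (Px n w) (Ehat n w)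
   (Gstar n) (Rstar n) Delta_miss rmin rmax
   (MC * Num.sqrt ((s n).+1%:R * ln (p n)%:R / (k n)%:R)) MV
   hgamma hDelta hrmin hrminmax (hdag n) skS cardE degS hC' (hi n) (hii n) (hiii n)
   hiv' hk0 _ _ _ G fG minG).
- move=> s0; have := arith_eta (ltW (lt_trans ltr01 lnp)) hk0 Ma a0 (ltW dl0) s0 hx.
  lra.
- have dlb : 0 <= dl <= 1 by rewrite (ltW dl0) dl1.
  exact: (arith_gap (ltW lnp) hk0 hgamma dlb hx hdc).
- rewrite /penal.
  have : 0 <= gamma * ln (p n)%:R by rewrite mulr_ge0 //; lra.
  lra.
Qed.
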